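(* Let $S$ be any scheduling rule, $V$ a finite set of variables, $G$ a p-goal and $G'$ a p-variant of $G$. Then: (a) if $G\xrightarrow{S,D}Q$ and $G'\xrightarrow{S,D}R$ are p-SLD derivations via $S$ with the same template $D$, then $R$ is a p-variant of $Q$; (b) if there is a p-SLD derivation $G'\xrightarrow{S,D}\cdot$ via $S$, then there is a p-SLD derivation $Dr=(G\xrightarrow{S,D}\cdot)$ via $S$ with $nvar(Dr)\cap V=\emptyset$.
   Context: A p-atom is a pair $a[p]$ of an atom $a$ and a rational priority $p$. A p-goal is a finite set of p-atoms with pairwise distinct priorities, regarded as a list ordered by increasing priority. Substitutions act on atoms and leave priorities unchanged. A clause is $h\leftarrow B$ with $h$ an atom and $B$ a p-goal. For p-goals with no common priority, $F+G=F\cup G$; $F|G$ denotes $F+G$ when all priorities of $F$ are smaller than those of $G$. A shifting $\underline{\pi}$ is a strictly increasing bijection $\mathbb{Q}\to\mathbb{Q}$ acting on priorities ($G\underline\pi$). $F$ is a p-variant of $G$ if $F=G\lambda\underline{\sigma}$ for a renaming $\lambda$ and a shifting $\underline{\sigma}$. Priority derivation step: for a p-goal $a|F$ ($a$ of least priority), clause $c=(h\leftarrow B)$, renaming $\xi$ with $var(a|F)\cap var(c\xi)=\emptyset$, idempotent relevant mgu $\theta$ of $a$ and $h\xi$, and shifting $\underline{\pi}$ with $F$, $B\xi\underline{\pi}$ sharing no priority: $a|F\xrightarrow{c\xi,\theta}(F+B\xi\underline{\pi})\theta$. A p-SLD derivation is a sequence of such steps with each renamed clause $c_j\xi_j$ variable-disjoint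 from the initial goal and all earlier renamed clauses; its template is the sequence of applied clauses and $nvar$ is the union of the sets $var(c_j\xi_j)$. Lowering: for $c=(h\leftarrow B)$, a step $a\lambda\underline{\sigma}|(K\lambda\underline{\sigma}+X)\xrightarrow{c}(X+K\lambda\underline{\sigma}+B\xi''\underline{\theta}'')\alpha''$ is a lowering by $X$ of $a|K\xrightarrow{c}(K+B\xi'\underline{\theta}')\alpha'$; a congruent lowering if some shifting $\underline{\rho}$ has $K\underline{\rho}=K\underline{\sigma}$ and $B\underline{\theta}'\underline{\rho}=B\underline{\theta}''$. Steps are (congruent) lowerings of each other if each is a (congruent) lowering of the other. A set $S$ of steps is deterministic if any two steps of $S$ that are lowerings of each other are congruent lowerings of each other; complete if (i) whenever some step $G\xrightarrow{c}\cdot$ exists, some step $G\xrightarrow{c}\cdot$ lies in $S$, and (ii) $S$ contains every step that is a congruent lowering of each other with a step of $S$. A scheduling rule is a complete deterministic set of steps; $G\xrightarrow{S,M}R$ denotes a p-SLD derivation with template $M$ all of whose steps lie in $S$. *)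

(* Defs.v *)
From mathcomp Require Import all_boot all_order all_algebra.
Set Implicit Arguments. Unset Strict Implicit. Unset Printing Implicit Defensive.
Import Order.TTheory GRing.Theory Num.Theory.

Inductive term : Type :=
| Var : nat -> term
| Fn : nat -> list term -> term.

Record atom : Type := Atom { asym : nat; aargs : list term }.

(* A substitution, as a total function on variables (its domain is the set of
   x with s x <> Var x). *)
Definition subst := nat -> term.

Fixpoint tsubst (s : subst) (t : term) : term :=
  match t with
  | Var x => s x
  | Fn f ts => Fn f (map (tsubst s) ts)
  end.

Definition asubst (s : subst) (a : atom) : atom :=
  Atom (asym a) (map (tsubst s) (aargs a)).

Fixpoint tvars (t : term) : seq nat :=
  match t with
  | Var x => [:: x]
  | Fn _ ts => flatten (map tvars ts)
  end.

Definition avars (a : atom) : seq nat := flatten (map tvars (aargs a)).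

Definition prio := rat.
Definition patom := (atom * prio)%type.

(* A p-goal is a finite set of p-atoms with pairwise distinct priorities,
   regarded as the list ordered by increasing priority: we represent it by
   this (canonical) strictly priority-sorted list. *)
Definition pgoal := seq patom.
Definition is_pgoal (G : pgoal) : Prop :=
  sorted (fun p q : patom => (p.2 < q.2)%R) G.

Definition prios (G : pgoal) : seq prio := map snd G.
Definition gvars (G : pgoal) : seq nat := flatten (map (fun p : patom => avars p.1) G).

Definition no_common_prio (F G : pgoal) : Prop :=
  forall p, p \in prios F -> p \notin prios G.

(* F + G = F \cup G (meaningful when F and G share no priority). *)
Definition padd (F G : pgoal) : pgoal :=
  sort (fun p q : patom => (p.2 <= q.2)%R) (F ++ G).

Definition gsubst (s : subst) (G : pgoal) : pgoal :=
  map (fun p : patom => (asubst s p.1, p.2)) G.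

Definition shifting (pi : prio -> prio) : Prop :=
  (forall x y : prio, (x < y)%R -> (pi x < pi y)%R) /\ bijective pi.

Definition gshift (pi : prio -> prio) (G : pgoal) : pgoal :=
  map (fun p : patom => (p.1, pi p.2)) G.

Definition renaming (r : nat -> nat) : Prop :=
  bijective r /\ exists s : seq nat, forall x, x \notin s -> r x = x.

Definition ren_subst (r : nat -> nat) : subst := fun x => Var (r x).

Definition pvariant (F G : pgoal) : Prop :=
  exists (lam : nat -> nat) (sig : prio -> prio),
    renaming lam /\ shifting sig /\ F = gshift sig (gsubst (ren_subst lam) G).

Record clause : Type := Clause { chead : atom; cbody : pgoal }.

Definition csubst (s : subst) (c : clause) : clause :=
  Clause (asubst s (chead c)) (gsubst s (cbody c)).

Definition cvars (c : clause) : seq nat := avars (chead c) ++ gvars (cbody c).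

Definition unifier (th : subst) (a b : atom) : Prop := asubst th a = asubst th b.

Definition mgu (th : subst) (a b : atom) : Prop :=
  unifier th a b /\
  forall s : subst, unifier s a b ->
    exists d : subst, forall x, s x = tsubst d (th x).

Definition idempotent (th : subst) : Prop :=
  forall x, tsubst th (th x) = th x.

Definition relevant (th : subst) (a b : atom) : Prop :=
  forall x, th x <> Var x ->
    x \in avars a ++ avars b /\
    forall y, y \in tvars (th x) -> y \in avars a ++ avars b.

Definition irmgu (th : subst) (a b : atom) : Prop :=
  idempotent th /\ relevant th a b /\ mgu th a b.

Record step : Type := Step {
  ssrc : pgoal;
  sclause : clause;
  sren : nat -> nat;
  smgu : subst;
  sshift : prio -> prio }.

Definition rclause (s : step) : clause := csubst (ren_subst (sren s)) (sclause s).

Definition sres (s : step) : pgoal :=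
  match ssrc s with
  | [::] => [::]
  | a :: F => gsubst (smgu s) (padd F (gshift (sshift s) (cbody (rclause s))))
  end.

Definition is_step (s : step) : Prop :=
  is_pgoal (ssrc s) /\ is_pgoal (cbody (sclause s)) /\
  match ssrc s with
  | [::] => False
  | a :: F =>
      renaming (sren s) /\
      (forall x, x \in gvars (a :: F) -> x \notin cvars (rclause s)) /\
      irmgu (smgu s) a.1 (chead (rclause s)) /\
      shifting (sshift s) /\
      no_common_prio F (gshift (sshift s) (cbody (rclause s)))
  end.

Fixpoint chain (G : pgoal) (ds : seq step) (Q : pgoal) : Prop :=
  match ds with
  | [::] => G = Q
  | s :: ds' => is_step s /\ ssrc s = G /\ chain (sres s) ds' Q
  end.

Fixpoint apart (used : seq nat) (ds : seq step) : Prop :=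
  match ds with
  | [::] => True
  | s :: ds' =>
      (forall x, x \in cvars (rclause s) -> x \notin used) /\
      apart (used ++ cvars (rclause s)) ds'
  end.

Definition pSLD (G : pgoal) (ds : seq step) (Q : pgoal) : Prop :=
  chain G ds Q /\ apart (gvars G) ds.

Definition template (ds : seq step) : seq clause := map sclause ds.

Definition nvar (ds : seq step) : seq nat := flatten (map (fun s => cvars (rclause s)) ds).

Definition lowering (s1 s2 : step) : Prop :=
  sclause s2 = sclause s1 /\
  exists (a : patom) (K : pgoal), ssrc s1 = a :: K /\
  exists (lam : nat -> nat) (sig : prio -> prio) (X : pgoal),
    renaming lam /\ shifting sig /\ is_pgoal X /\
    no_common_prio (gshift sig (gsubst (ren_subst lam) K)) X /\
    ssrc s2 = (asubst (ren_subst lam) a.1, sig a.2)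
                :: padd (gshift sig (gsubst (ren_subst lam) K)) X.

Definition congruent_lowering (s1 s2 : step) : Prop :=
  sclause s2 = sclause s1 /\
  exists (a : patom) (K : pgoal), ssrc s1 = a :: K /\
  exists (lam : nat -> nat) (sig : prio -> prio) (X : pgoal),
    renaming lam /\ shifting sig /\ is_pgoal X /\
    no_common_prio (gshift sig (gsubst (ren_subst lam) K)) X /\
    ssrc s2 = (asubst (ren_subst lam) a.1, sig a.2)
                :: padd (gshift sig (gsubst (ren_subst lam) K)) X /\
    exists rho : prio -> prio, shifting rho /\
      gshift rho K = gshift sig K /\
      gshift rho (gshift (sshift s1) (cbody (sclause s1)))
        = gshift (sshift s2) (cbody (sclause s1)).

Definition mutual_lowerings (s1 s2 : step) : Prop := lowering s1 s2 /\ lowering s2 s1.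
Definition mutual_congruent_lowerings (s1 s2 : step) : Prop :=
  congruent_lowering s1 s2 /\ congruent_lowering s2 s1.

Definition deterministic (S : step -> Prop) : Prop :=
  forall s1 s2, S s1 -> S s2 -> mutual_lowerings s1 s2 ->
    mutual_congruent_lowerings s1 s2.

Definition complete (S : step -> Prop) : Prop :=
  (forall G c, (exists s, is_step s /\ ssrc s = G /\ sclause s = c) ->
     exists s, S s /\ ssrc s = G /\ sclause s = c) /\
  (forall s1 s2, S s1 -> is_step s2 -> mutual_congruent_lowerings s1 s2 -> S s2).

Definition scheduling_rule (S : step -> Prop) : Prop :=
  (forall s, S s -> is_step s) /\ complete S /\ deterministic S.

Fixpoint all_in (S : step -> Prop) (ds : seq step) : Prop :=
  match ds with [::] => True | s :: ds' => S s /\ all_in S ds' end.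

Definition pSLD_via (S : step -> Prop) (G : pgoal) (D : seq clause)
    (ds : seq step) (Q : pgoal) : Prop :=
  pSLD G ds Q /\ template ds = D /\ all_in S ds.

(* Main.v *)
Require Import Defs.
From mathcomp Require Import all_boot all_order all_algebra.
From Stdlib Require Import Classical FunctionalExtensionality.
Set Implicit Arguments. Unset Strict Implicit. Unset Printing Implicit Defensive.
Import Order.TTheory GRing.Theory Num.Theory.

Fixpoint InT (u : term) (l : seq term) : Prop :=
  match l with nil => False | cons a l' => a = u \/ InT u l' end.

Section TermInd.
Variable P : term -> Prop.
Hypothesis HV : forall x, P (Var x).
Hypothesis HF : forall f ts, (forall t, InT t ts -> P t) -> P (Fn f ts).
Fixpoint term_ind' (t : term) : P t :=
  match t with
  | Var x => HV x
  | Fn f ts => @HF f ts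
      ((fix go (l : seq term) : forall u, InT u l -> P u :=
       match l as l0 return forall u, InT u l0 -> P u with
       | nil => fun u (H : False) => False_ind (P u) H
       | cons a l' => fun u (H : a = u \/ InT u l') =>
           match H with
           | or_introl e => eq_ind a P (term_ind' a) u e
           | or_intror H' => go l' u H' end
       end) ts)
  end.
End TermInd.

Lemma map_ext_In' (A : Type) (f g : term -> A) (ts : seq term) :
  (forall t, InT t ts -> f t = g t) -> map f ts = map g ts.
Proof.
elim: ts => //= a l IH H; rewrite H; last by left.
by rewrite IH // => t Ht; apply: H; right.
Qed.

Lemma tsubst_comp s1 s2 t :
  tsubst s2 (tsubst s1 t) = tsubst (fun x => tsubst s2 (s1 x)) t.
Proof.
elim/term_ind': t => //= f ts IH; congr Fn; rewrite -map_comp.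
by apply: map_ext_In' => t Ht; by rewrite /= IH.
Qed.

Lemma tsubst_Var t : tsubst Var t = t.
Proof.
elim/term_ind': t => //= f ts IH; congr Fn.
rewrite -{2}(map_id ts); apply: map_ext_In' => t Ht; by rewrite /= IH.
Qed.

Lemma in_flatten_tvars y u ts :
  InT u ts -> y \in tvars u -> y \in flatten (map tvars ts).
Proof.
elim: ts => //= a l IH [->|H] Hy; rewrite mem_cat ?Hy //.
by rewrite IH ?orbT.
Qed.

Lemma tsubst_ext s1 s2 t :
  (forall x, x \in tvars t -> s1 x = s2 x) -> tsubst s1 t = tsubst s2 t.
Proof.
elim/term_ind': t => /= [x H|f ts IH H]; first by apply: H; rewrite inE.
congr Fn; apply: map_ext_In' => u Hu; apply: IH => // x Hx.
by apply: H; apply: in_flatten_tvars Hx.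
Qed.

Lemma tvars_subst s t y :
  (y \in tvars (tsubst s t)) = has (fun x => y \in tvars (s x)) (tvars t).
Proof.
elim/term_ind': t => /= [x|f ts IH]; first by rewrite orbF.
elim: ts IH => //= a l IHl IH.
rewrite mem_cat has_cat IH; last by left.
by rewrite IHl // => t Ht; apply: IH; right.
Qed.

Lemma tsubst_fix s t : tsubst s t = t -> forall y, y \in tvars t -> s y = Var y.
Proof.
elim/term_ind': t => /= [x H y|f ts IH]; first by rewrite inE => /eqP ->.
case=> E y.
elim: ts IH E => //= a l IHl IH [E1 E2].
rewrite mem_cat => /orP [Hy|Hy]; first by apply: (IH a) => //; left.
by apply: IHl => // t Ht; apply: IH; right.
Qed.

Lemma args_ext s1 s2 l :
  (forall x, x \in flatten (map tvars l) -> s1 x = s2 x) ->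
  map (tsubst s1) l = map (tsubst s2) l.
Proof.
elim: l => //= a l IH H; rewrite (tsubst_ext (s1:=s1) (s2:=s2)).
  by rewrite IH // => x Hx; apply: H; rewrite mem_cat Hx orbT.
by move=> x Hx; apply: H; rewrite mem_cat Hx.
Qed.

Lemma args_vars s l y :
  (y \in flatten (map tvars (map (tsubst s) l))) =
  has (fun x => y \in tvars (s x)) (flatten (map tvars l)).
Proof. by elim: l => //= a l IH; rewrite mem_cat has_cat IH tvars_subst. Qed.

Lemma asubst_comp s1 s2 a :
  asubst s2 (asubst s1 a) = asubst (fun x => tsubst s2 (s1 x)) a.
Proof. rewrite /asubst /= -map_comp; congr Atom; apply: eq_map => t; apply: tsubst_comp. Qed.

Lemma asubst_ext s1 s2 a :
  (forall x, x \in avars a -> s1 x = s2 x) -> asubst s1 a = asubst s2 a.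
Proof. by move=> H; rewrite /asubst (args_ext H). Qed.

Lemma asubst_Var a : asubst Var a = a.
Proof. case: a => f l; rewrite /asubst /=; congr Atom; rewrite -{2}(map_id l); apply: eq_map => t; apply: tsubst_Var. Qed.

Lemma avars_subst s a y :
  (y \in avars (asubst s a)) = has (fun x => y \in tvars (s x)) (avars a).
Proof. by rewrite /avars /asubst /= args_vars. Qed.

Lemma gvars_cons p G : gvars (p :: G) = avars p.1 ++ gvars G.
Proof. by []. Qed.

Lemma gsubst_comp s1 s2 G :
  gsubst s2 (gsubst s1 G) = gsubst (fun x => tsubst s2 (s1 x)) G.
Proof. rewrite /gsubst -map_comp; apply: eq_map => p /=; by rewrite asubst_comp. Qed.

Lemma gsubst_ext s1 s2 G :
  (forall x, x \in gvars G -> s1 x = s2 x) -> gsubst s1 G = gsubst s2 G.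
Proof.
elim: G => //= p G IH H; rewrite IH ?(asubst_ext (s1:=s1) (s2:=s2)) //.
  by move=> x Hx; apply: H; rewrite gvars_cons mem_cat Hx.
by move=> x Hx; apply: H; rewrite gvars_cons mem_cat Hx orbT.
Qed.

Lemma gsubst_Var G : gsubst Var G = G.
Proof. elim: G => //= [[a p] G IH]; by rewrite asubst_Var IH. Qed.

Lemma gvars_subst s G y :
  (y \in gvars (gsubst s G)) = has (fun x => y \in tvars (s x)) (gvars G).
Proof. elim: G => //= p G IH; by rewrite !gvars_cons mem_cat has_cat avars_subst -IH. Qed.

Lemma gvars_shift f G : gvars (gshift f G) = gvars G.
Proof. by elim: G => //= p G IH; rewrite !gvars_cons IH. Qed.

Lemma gshift_subst f s G : gshift f (gsubst s G) = gsubst s (gshift f G).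
Proof. by rewrite /gshift /gsubst -!map_comp. Qed.

Lemma gshift_comp f g G : gshift f (gshift g G) = gshift (fun p => f (g p)) G.
Proof. by rewrite /gshift -map_comp. Qed.

Lemma prios_subst s G : prios (gsubst s G) = prios G.
Proof. by rewrite /prios /gsubst -map_comp. Qed.

Lemma prios_shift f G : prios (gshift f G) = map f (prios G).
Proof. by rewrite /prios /gshift -!map_comp. Qed.

Lemma has_ren (r : nat -> nat) l y :
  has (fun x => y \in tvars (ren_subst r x)) l = (y \in map r l).
Proof. by elim: l => //= a l IH; rewrite IH inE. Qed.

Lemma cvars_subst s c y :
  (y \in cvars (csubst s c)) = has (fun x => y \in tvars (s x)) (cvars c).
Proof. by rewrite /cvars /csubst /= mem_cat has_cat avars_subst gvars_subst. Qed.

Lemma gvars_ren r G y : (y \in gvars (gsubst (ren_subst r) G)) = (y \in map r (gvars G)).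
Proof. by rewrite gvars_subst has_ren. Qed.
Lemma avars_ren r a y : (y \in avars (asubst (ren_subst r) a)) = (y \in map r (avars a)).
Proof. by rewrite avars_subst has_ren. Qed.
Lemma cvars_ren r c y : (y \in cvars (csubst (ren_subst r) c)) = (y \in map r (cvars c)).
Proof. by rewrite cvars_subst has_ren. Qed.

Lemma renaming_id : renaming id.
Proof. split; [by exists id | by exists [::]]. Qed.

Lemma renaming_comp r1 r2 : renaming r1 -> renaming r2 -> renaming (fun x => r1 (r2 x)).
Proof.
move=> [b1 [s1 H1]] [b2 [s2 H2]]; split; first exact: (bij_comp b1 b2).
exists (s1 ++ s2) => x; rewrite mem_cat negb_or => /andP [h1 h2].
by rewrite H2 // H1.
Qed.

Lemma renaming_inv r : renaming r ->
  exists ri, renaming ri /\ cancel r ri /\ cancel ri r.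
Proof.
move=> [[ri c1 c2] [s H]]; exists ri; split; last by split.
split; first by exists r.
by exists s => x Hx; rewrite -{1}(H x Hx) c1.
Qed.

Lemma renaming_inj r : renaming r -> injective r.
Proof. by move=> [b _]; apply: bij_inj. Qed.

Definition swap (u v x : nat) := if x == u then v else if x == v then u else x.

Lemma swapK u v : involutive (swap u v).
Proof.
move=> x; rewrite /swap.
case: (eqVneq x u) => [->|xu]; first by rewrite eqxx; case: eqVneq.
case: (eqVneq x v) => [->|xv]; first by rewrite eqxx.
by rewrite (negPf xu) (negPf xv).
Qed.

Lemma renaming_swap u v : renaming (swap u v).
Proof.
split; first exact: (inv_bij (swapK u v)).
exists [:: u; v] => x; rewrite !inE negb_or => /andP [h1 h2].
by rewrite /swap (negPf h1) (negPf h2).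
Qed.

Lemma ren_extend (A : seq nat) (g : nat -> nat) :
  {in A &, injective g} ->
  exists p, renaming p /\ {in A, forall x, p x = g x} /\
    (forall x, x \notin A ++ map g A -> p x = x).
Proof.
elim: A => [|a A IH] Hg.
  by exists id; split; [exact: renaming_id|].
have HgA : {in A &, injective g}.
  by move=> x y hx hy; apply: Hg; rewrite inE ?hx ?hy orbT.
have [p [rp [pA pS]]] := IH HgA.
case aA: (a \in A).
  exists p; split=> //; split.
    by move=> x; rewrite inE => /orP [/eqP ->|]; [apply: pA|apply: pA].
  move=> x Hx; apply: pS; apply: contra Hx.
  by rewrite !mem_cat /= !inE => /orP [->|->]; rewrite ?orbT.
exists (fun x => swap (p a) (g a) (p x)); split.
  by apply: renaming_comp => //; apply: renaming_swap.
have pinj := renaming_inj rp.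
split.
  move=> x; rewrite inE => /orP [/eqP ->|xA]; first by rewrite /swap eqxx.
  rewrite (pA x xA) /swap.
  have ax : x != a by apply/eqP => E; rewrite -E xA in aA.
  have -> : (g x == p a) = false.
    by apply/negbTE/eqP => E; rewrite -(pA x xA) in E; move/pinj: E => E; rewrite E eqxx in ax.
  have -> : (g x == g a) = false.
    apply/negbTE/eqP => E; move: ax; rewrite (Hg x a _ _ E) ?eqxx //.
      by rewrite inE xA orbT.
    by rewrite inE eqxx.
  done.
move=> x Hx.
have xa : x != a by apply: contra Hx => /eqP ->; rewrite mem_cat inE eqxx.
have xga : x != g a by apply: contra Hx => /eqP ->; rewrite mem_cat; apply/orP; right; exact: mem_head.
have px : p x = x.
  by apply: pS; apply: contra Hx; rewrite !mem_cat /= !inE => /orP [->|->]; rewrite ?orbT.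
rewrite px /swap.
have -> : (x == p a) = false.
  apply/negbTE/eqP => E; have : p x = p a by rewrite px.
  by move/pinj => E'; rewrite E' eqxx in xa.
by rewrite (negPf xga).
Qed.
Section SC.
Local Open Scope ring_scope.

Lemma shift_lt f x y : shifting f -> (f x < f y) = (x < y).
Proof.
move=> [H _]; case: (ltgtP x y) => [xy|yx|->]; first exact: H.
  by apply: lt_gtF; apply: H.
by rewrite ltxx.
Qed.

Lemma shift_le f x y : shifting f -> (f x <= f y) = (x <= y).
Proof. by move=> Hf; rewrite !leNgt shift_lt. Qed.

Lemma shifting_id : shifting id.
Proof. by split => //; exists id. Qed.

Lemma shifting_comp f g : shifting f -> shifting g -> shifting (fun p => f (g p)).
Proof.
move=> [Hf bf] [Hg bg]; split; first by move=> x y /Hg /Hf.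
exact: (bij_comp bf bg).
Qed.

Lemma shifting_inv f : shifting f ->
  exists fi, shifting fi /\ cancel f fi /\ cancel fi f.
Proof.
move=> Hf; case: (Hf) => _ [fi c1 c2]; exists fi; split; last by split.
split; last by exists f.
by move=> x y xy; rewrite -(shift_lt _ _ Hf) !c2.
Qed.

Lemma is_pgoalE G : sorted (fun p q : patom => (p.2 < q.2)%R) G = sorted <%R (prios G).
Proof. by rewrite /prios sorted_map. Qed.

Lemma pgoal_subst s G : is_pgoal (gsubst s G) <-> is_pgoal G.
Proof. by rewrite /is_pgoal !is_pgoalE prios_subst. Qed.

Lemma pgoal_shift f G : shifting f -> is_pgoal (gshift f G) <-> is_pgoal G.
Proof.
move=> Hf; rewrite /is_pgoal !is_pgoalE prios_shift sorted_map.
have -> : relpre f <%R = <%R :> rel prio.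
  by apply: functional_extensionality => x; apply: functional_extensionality => y; rewrite /= shift_lt.
by [].
Qed.

Lemma padd_nil L : is_pgoal L -> padd L [::] = L.
Proof.
move=> HL; rewrite /padd cats0 sorted_sort //.
  by move=> y x z /= h1 h2; apply: le_trans h1 h2.
by apply: sub_sorted HL => x y /= /ltW.
Qed.

Lemma prios_padd F G : prios (padd F G) = sort <=%R (prios F ++ prios G).
Proof. by rewrite /prios /padd -map_cat sort_map. Qed.

Lemma size_padd F G : size (padd F G) = (size F + size G)%N.
Proof. by rewrite /padd size_sort size_cat. Qed.

Lemma gsubst_padd s F G : gsubst s (padd F G) = padd (gsubst s F) (gsubst s G).
Proof. by rewrite /padd /gsubst -map_cat sort_map. Qed.

Lemma gshift_padd f F G : shifting f ->
  gshift f (padd F G) = padd (gshift f F) (gshift f G).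
Proof.
move=> Hf; rewrite /padd /gshift -map_cat sort_map; congr map; congr sort.
by apply: functional_extensionality => x; apply: functional_extensionality => y; rewrite /= shift_le.
Qed.

Lemma padd_pgoal F G : is_pgoal F -> is_pgoal G -> no_common_prio F G ->
  is_pgoal (padd F G).
Proof.
rewrite /is_pgoal !is_pgoalE prios_padd sort_lt_sorted cat_uniq => HF HG H.
rewrite (lt_sorted_uniq HF) (lt_sorted_uniq HG) andbT /=.
apply/hasPn => p pG; apply/negP => pF.
by have := H p pF; rewrite pG.
Qed.
End SC.

Lemma rel_vars th a b x y : relevant th a b -> x \in avars a ++ avars b ->
  y \in tvars (th x) -> y \in avars a ++ avars b.
Proof.
move=> Hr Hx; case: (classic (th x = Var x)) => [->|ne].
  by rewrite inE => /eqP ->.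
by apply: (Hr x ne).2.
Qed.

Lemma rel_fix th a b x : relevant th a b -> x \notin avars a ++ avars b -> th x = Var x.
Proof.
move=> Hr Hx; case: (classic (th x = Var x)) => // ne.
by have := (Hr x ne).1; rewrite (negPf Hx).
Qed.

Lemma memR (m : nat -> nat) a b y :
  (y \in avars (asubst (ren_subst m) a) ++ avars (asubst (ren_subst m) b)) =
  (y \in map m (avars a ++ avars b)).
Proof. by rewrite mem_cat !avars_ren map_cat mem_cat. Qed.

Lemma tsubst_ren_comp s m t :
  tsubst s (tsubst (ren_subst m) t) = tsubst (fun x => s (m x)) t.
Proof. by rewrite tsubst_comp. Qed.

Definition conj_subst (m mi : nat -> nat) (th : subst) : subst :=
  fun y => tsubst (ren_subst m) (th (mi y)).

Lemma irmgu_conj th a b m mi : cancel m mi -> cancel mi m -> irmgu th a b ->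
  irmgu (conj_subst m mi th) (asubst (ren_subst m) a) (asubst (ren_subst m) b).
Proof.
move=> c1 c2 [Hid [Hrel [Hun Hmg]]].
set th' := conj_subst m mi th.
have K1 t : tsubst th' (tsubst (ren_subst m) t) = tsubst (ren_subst m) (tsubst th t).
  rewrite tsubst_ren_comp tsubst_comp; apply: tsubst_ext => x _.
  by rewrite /th' /conj_subst c1.
have KA c : asubst th' (asubst (ren_subst m) c) = asubst (ren_subst m) (asubst th c).
  by rewrite /asubst /= -!map_comp; congr Atom; apply: eq_map => t /=; rewrite K1.
split.
  by move=> x; rewrite {2}/th' /conj_subst K1 Hid.
split.
  move=> x ne.
  have ne' : th (mi x) <> Var (mi x).
    by move=> E; apply: ne; rewrite /th' /conj_subst E /= /ren_subst c2.
  have [h1 h2] := Hrel _ ne'.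
  split; first by rewrite memR -{1}(c2 x) map_f.
  move=> y; rewrite /th' /conj_subst tvars_subst has_ren => /mapP [z hz ->].
  by rewrite memR map_f // h2.
split.
  by rewrite /unifier !KA Hun.
move=> s Hs.
have Hs' : unifier (fun x => s (m x)) a b.
  by move: Hs; rewrite /unifier !asubst_comp.
have [d Hd] := Hmg _ Hs'.
exists (fun z => d (mi z)) => y.
rewrite /th' /conj_subst tsubst_ren_comp.
have -> : tsubst (fun x => d (mi (m x))) (th (mi y)) = tsubst d (th (mi y)).
  by apply: tsubst_ext => x _; rewrite c1.
by rewrite -Hd c2.
Qed.

Lemma mgu_ren th1 th2 a b m : irmgu th1 a b -> renaming m ->
  irmgu th2 (asubst (ren_subst m) a) (asubst (ren_subst m) b) ->
  exists eta, renaming eta /\ forall x, th2 (m x) = tsubst (ren_subst eta) (th1 x).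
Proof.
move=> [_ [Hr1 [Hu1 Hm1]]] rm [_ [Hr2 [Hu2 Hm2]]].
have [mi [rmi [c1 c2]]] := renaming_inv rm.
have Hs1 : unifier (fun x => th2 (m x)) a b.
  by move: Hu2; rewrite /unifier !asubst_comp.
have [d Hd] := Hm1 _ Hs1.
have Hs2 : unifier (fun y => th1 (mi y)) (asubst (ren_subst m) a) (asubst (ren_subst m) b).
  rewrite /unifier !asubst_comp.
  have E c : asubst (fun x => tsubst (fun y => th1 (mi y)) (ren_subst m x)) c = asubst th1 c.
    by apply: asubst_ext => x _ /=; rewrite c1.
  by rewrite !E.
have [d' Hd'] := Hm2 _ Hs2.
set R := avars a ++ avars b.
have Hfix x z : z \in tvars (th1 x) -> tsubst d' (d z) = Var z.
  have E : tsubst (fun z => tsubst d' (d z)) (th1 x) = th1 x.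
    by rewrite -tsubst_comp -Hd -Hd' c1.
  by move=> hz; have := tsubst_fix E hz.
set A := flatten (map (fun x => tvars (th1 x)) R).
set f := fun z => match d z with Var w => w | _ => z end.
have HA z : z \in A -> d z = Var (f z) /\ d' (f z) = Var z.
  case/flatten_mapP => x _ hz; have := Hfix x z hz.
  by rewrite /f; case: (d z) => //= f0 l.
have AR z : z \in A -> z \in R.
  by case/flatten_mapP => x hx hz; apply: (rel_vars Hr1 hx hz).
set g := fun z => mi (f z).
have ginj : {in A &, injective g}.
  move=> z1 z2 h1 h2 /(can_inj c2) E.
  have [_ e1] := HA z1 h1; have [_ e2] := HA z2 h2.
  by move: e1; rewrite E e2 => [[]].
have [p [rp [pA pS]]] := ren_extend ginj.
exists (fun z => m (p z)); split; first exact: renaming_comp.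
move=> x.
case xR: (x \in R).
  rewrite Hd; apply: tsubst_ext => z hz.
  have zA : z \in A by apply/flatten_mapP; exists x.
  by rewrite /ren_subst pA // /g c2 (HA z zA).1.
have th1x : th1 x = Var x by apply: (rel_fix Hr1); rewrite xR.
have th2x : th2 (m x) = Var (m x).
  apply: (rel_fix Hr2); rewrite memR; apply/negP => /mapP [w hw /(can_inj c1) E].
  by rewrite E hw in xR.
rewrite th1x th2x /= /ren_subst pS //.
rewrite mem_cat negb_or; apply/andP; split.
  by apply/negP => /AR; rewrite xR.
apply/negP => /mapP [z zA Ex].
case/flatten_mapP: (zA) => x' hx' hz.
have fz : f z \in tvars (th2 (m x')).
  rewrite Hd tvars_subst; apply/hasP; exists z => //.
  by rewrite (HA z zA).1 inE.
have : f z \in map m R.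
  by rewrite -memR; apply: (rel_vars Hr2 _ fz); rewrite memR map_f.
case/mapP => w hw Ew.
by move: xR; rewrite Ex /g Ew c1 hw.
Qed.

Lemma ren_agree_a m l a : {in avars a, forall x, m x = l x} ->
  asubst (ren_subst m) a = asubst (ren_subst l) a.
Proof. by move=> H; apply: asubst_ext => x hx; rewrite /ren_subst H. Qed.

Lemma ren_agree_g m l G : {in gvars G, forall x, m x = l x} ->
  gsubst (ren_subst m) G = gsubst (ren_subst l) G.
Proof. by move=> H; apply: gsubst_ext => x hx; rewrite /ren_subst H. Qed.

Lemma ren_comp_a m l a :
  asubst (ren_subst m) (asubst (ren_subst l) a) = asubst (ren_subst (fun x => m (l x))) a.
Proof. by rewrite asubst_comp. Qed.

Lemma ren_comp_g m l G :
  gsubst (ren_subst m) (gsubst (ren_subst l) G) = gsubst (ren_subst (fun x => m (l x))) G.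
Proof. by rewrite gsubst_comp. Qed.

Lemma mu_exists (lam xi1 xi2 : nat -> nat) G0 c :
  renaming lam -> renaming xi1 -> renaming xi2 ->
  (forall x, x \in gvars G0 -> x \notin cvars (csubst (ren_subst xi1) c)) ->
  (forall x, x \in map lam (gvars G0) -> x \notin cvars (csubst (ren_subst xi2) c)) ->
  exists mu, renaming mu /\ {in gvars G0, forall x, mu x = lam x} /\
    {in cvars c, forall x, mu (xi1 x) = xi2 x}.
Proof.
move=> rl r1 r2 H1 H2.
have [x1i [_ [c1 c2]]] := renaming_inv r1.
set A := gvars G0 ++ map xi1 (cvars c).
set g := fun z => if z \in gvars G0 then lam z else xi2 (x1i z).
have linj := renaming_inj rl; have x2inj := renaming_inj r2.
have ginj : {in A &, injective g}.
  move=> z1 z2; rewrite /A !mem_cat /g.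
  have mix u w : u \in gvars G0 -> w \in map xi1 (cvars c) -> lam u <> xi2 (x1i w).
    move=> hu /mapP [v hv ->]; rewrite c1 => E.
    have := H2 (lam u) (map_f _ hu); rewrite cvars_ren E map_f //.
  case h1: (z1 \in gvars G0); case h2: (z2 \in gvars G0) => //=.
  - by move=> _ _ /linj.
  - by move=> _ hz2 /(mix _ _ h1 hz2).
  - by move=> hz1 _ /esym /(mix _ _ h2 hz1).
  - by move=> hz1 hz2 /x2inj /(can_inj c2).
have [mu [rmu [muA _]]] := ren_extend ginj.
exists mu; split=> //; split.
  by move=> x hx; rewrite muA /g ?hx // /A mem_cat hx.
move=> x hx; rewrite muA /g; last by rewrite /A mem_cat map_f ?orbT.
have -> : (xi1 x \in gvars G0) = false.
  apply/negP => h; have := H1 _ h; rewrite cvars_ren map_f //.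
by rewrite c1.
Qed.

Lemma le_foldr_max (w : nat) s : w \in s -> (w <= foldr maxn 0 s)%N.
Proof.
elim: s => //= a s IH; rewrite inE => /orP [/eqP ->|h]; first exact: leq_maxl.
by apply: leq_trans (IH h) (leq_maxr _ _).
Qed.

Lemma fresh_ren (c W : seq nat) :
  exists xi, renaming xi /\ forall x, x \in map xi c -> x \notin W.
Proof.
set N := (foldr maxn 0 W).+1.
have ginj : {in c &, injective (fun x => N + x)%N} by move=> x y _ _ /addnI.
have [p [rp [pA _]]] := ren_extend ginj.
exists p; split=> // y /mapP [x hx ->]; rewrite pA //.
apply/negP => /le_foldr_max; rewrite /N; apply/negP; rewrite -ltnNge.
by rewrite addSn ltnS leq_addr.
Qed.

Lemma ncp_shift F B f g : shifting f -> no_common_prio F (gshift g B) ->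
  no_common_prio (gshift f F) (gshift (fun p => f (g p)) B).
Proof.
move=> [_ bf] H p; rewrite !prios_shift => /mapP [q hq ->].
apply/negP => /mapP [r hr /(bij_inj bf) E].
by have := H q hq; rewrite prios_shift E map_f.
Qed.

Lemma ncp_ext F B F' B' : prios F = prios F' -> prios B = prios B' ->
  no_common_prio F B -> no_common_prio F' B'.
Proof. by move=> e1 e2 H p; rewrite -e1 -e2; apply: H. Qed.

Lemma transport s lam sig (W : seq nat) : is_step s -> renaming lam -> shifting sig ->
  exists t, is_step t /\ ssrc t = gshift sig (gsubst (ren_subst lam) (ssrc s)) /\
    sclause t = sclause s /\ (forall x, x \in cvars (rclause t) -> x \notin W) /\
    sshift t = (fun p => sig (sshift s p)).
Proof.
case: s => [[|a F] c xi th pi]; rewrite /is_step /=; first by case=> _ [].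
move=> [HG [HB [rxi [Hdis [Hmgu [Hpi Hncp]]]]]] rl Hsig.
set G1 := gshift sig (gsubst (ren_subst lam) (a :: F)).
have [xi' [rxi' Hfr]] := fresh_ren (cvars c) (W ++ gvars G1).
have Hfr' x : x \in cvars (csubst (ren_subst xi') c) -> x \notin W ++ gvars G1.
  by rewrite cvars_ren; apply: Hfr.
have [mu [rmu [muG muC]]] : exists mu, renaming mu /\
    {in gvars (a :: F), forall x, mu x = lam x} /\
    {in cvars c, forall x, mu (xi x) = xi' x}.
  apply: mu_exists => // x hx; apply/negP => /Hfr'.
  by rewrite mem_cat negb_or /G1 gvars_shift gvars_ren hx andbF.
have [mui [_ [m1 m2]]] := renaming_inv rmu.
have HG1 : is_pgoal G1 by rewrite /G1; apply/pgoal_shift => //; apply/pgoal_subst.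
exists (Step ((asubst (ren_subst lam) a.1, sig a.2) :: gshift sig (gsubst (ren_subst lam) F))
          c xi' (conj_subst mu mui th) (fun p => sig (pi p))).
split; last first.
  split=> //; split=> //; split=> //.
  by move=> x /Hfr'; rewrite mem_cat negb_or => /andP [].
split; first exact: HG1.
split; first exact: HB.
rewrite /=; split=> //; split.
  move=> x hx; apply/negP => /Hfr'; rewrite mem_cat negb_or => /andP [_].
  by rewrite /G1 /= hx.
split; last first.
  split; first by apply: shifting_comp.
  apply: (ncp_ext _ _ (ncp_shift Hsig Hncp)).
    by rewrite !prios_shift prios_subst.
  by rewrite !prios_shift !prios_subst.
have := irmgu_conj m1 m2 Hmgu.
rewrite (@ren_agree_a mu lam a.1); last first.
  by move=> x hx; apply: muG; rewrite gvars_cons mem_cat hx.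
rewrite ren_comp_a (@ren_agree_a _ xi' (chead c)) //.
by move=> x hx; apply: muC; rewrite /cvars mem_cat hx.
Qed.

Lemma gshift_prios f g K : map f (prios K) = map g (prios K) -> gshift f K = gshift g K.
Proof. by elim: K => //= p K IH [e1 /IH ->]; rewrite e1. Qed.

Lemma gshift_id f G : (forall p, f p = p) -> gshift f G = G.
Proof. by move=> H; elim: G => //= [[a p] G ->]; rewrite H. Qed.

Lemma gsubst_ren_id l G : (forall x, l x = x) -> gsubst (ren_subst l) G = G.
Proof. by move=> H; rewrite -{2}(gsubst_Var G); apply: gsubst_ext => x _; rewrite /ren_subst H. Qed.

Lemma asubst_ren_id l a : (forall x, l x = x) -> asubst (ren_subst l) a = a.
Proof. by move=> H; rewrite -{2}(asubst_Var a); apply: asubst_ext => x _; rewrite /ren_subst H. Qed.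

Lemma variant_inv lam lami sig sigi G : cancel lam lami -> cancel sig sigi ->
  gshift sigi (gsubst (ren_subst lami) (gshift sig (gsubst (ren_subst lam) G))) = G.
Proof.
move=> c1 c2; rewrite gshift_subst gshift_comp gshift_id // ren_comp_g.
by apply: gsubst_ren_id.
Qed.

Lemma id_variant G : gshift id (gsubst (ren_subst id) G) = G.
Proof. by rewrite gshift_id // gsubst_ren_id. Qed.

Lemma pgoal_tail a K : is_pgoal (a :: K) -> is_pgoal K.
Proof. exact: path_sorted. Qed.

Lemma sres_pgoal s : is_step s -> is_pgoal (sres s).
Proof.
case: s => [[|a F] c xi th pi]; rewrite /is_step /sres /=; first by case=> _ [].
move=> [HG [HB [_ [_ [_ [Hpi Hn]]]]]].
apply/pgoal_subst; apply: padd_pgoal => //; first exact: (pgoal_tail HG).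
by apply/pgoal_shift => //; apply/pgoal_subst.
Qed.

Lemma step_variant S s1 s2 lam sig : scheduling_rule S -> S s1 -> S s2 ->
  renaming lam -> shifting sig ->
  ssrc s2 = gshift sig (gsubst (ren_subst lam) (ssrc s1)) -> sclause s2 = sclause s1 ->
  pvariant (sres s2) (sres s1).
Proof.
move=> [HS [_ Hdet]] S1 S2 rl Hsig Esrc Ecl.
have St1 := HS _ S1; have St2 := HS _ S2.
have [lami [rli [l1 l2]]] := renaming_inv rl.
have [sigi [Hsigi [g1 g2]]] := shifting_inv Hsig.
case: s1 S1 St1 Esrc Ecl => [src1 c xi1 th1 pi1] S1 St1 Esrc Ecl.
case: s2 S2 St2 Esrc Ecl => [src2 c2 xi2 th2 pi2] S2 St2 /= Esrc Ecl.
subst c2 src2.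
case: src1 S1 St1 S2 St2 => [|[a1 ap] K] S1 St1 S2 St2; first by case: St1 => _ [].
have [HG1 [HB1 [rx1 [Hd1 [Hm1 [Hp1 Hn1]]]]]] := St1.
have St2' : is_step (Step ((asubst (ren_subst lam) a1, sig ap) ::
    gshift sig (gsubst (ren_subst lam) K)) c xi2 th2 pi2) := St2.
have [HG2 [HB2 [rx2 [Hd2 [Hm2 [Hp2 Hn2]]]]]] := St2'.
have HK := pgoal_tail HG1.
have HK' : is_pgoal (gshift sig (gsubst (ren_subst lam) K)).
  by apply/pgoal_shift => //; apply/pgoal_subst.
have Hlow : mutual_lowerings (Step ((a1, ap) :: K) c xi1 th1 pi1)
   (Step (gshift sig (gsubst (ren_subst lam) ((a1, ap) :: K))) c xi2 th2 pi2).
  split.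
    split=> //; exists (a1, ap), K; split=> //.
    exists lam, sig, [::]; do 4! (split=> //).
    by rewrite /= padd_nil.
  split=> //; exists (asubst (ren_subst lam) a1, sig ap), (gshift sig (gsubst (ren_subst lam) K)).
  split=> //.
  exists lami, sigi, [::]; do 4! (split=> //).
  rewrite padd_nil; last by apply/pgoal_shift => //; apply/pgoal_subst.
  by have := variant_inv ((a1, ap) :: K) l1 g1.
have [[_ [a0 [K0 [E1 [lam' [sig' [X [rl' [Hsig' [HX [HnX [E2 [rho [Hrho [HKr HBr]]]]]]]]]]]]]]] _] :=
  Hdet _ _ S1 S2 Hlow.
case: E1 => ? ?; subst a0 K0.
move: E2 => /= [_ _ EK].
have sz := congr1 size EK; rewrite size_padd !size_map in sz.
have X0 : X = [::].
  apply/size0nil/eqP; by rewrite -(eqn_add2l (size K)) addn0 -sz.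
subst X; rewrite padd_nil in EK; last by apply/pgoal_shift => //; apply/pgoal_subst.
have Ep := congr1 prios EK; rewrite !prios_shift !prios_subst in Ep.
have HKs : gshift rho K = gshift sig K by rewrite HKr; apply: gshift_prios.
move: HBr => /= HBr.
have [mu [rmu [muG muC]]] : exists mu, renaming mu /\
    {in gvars ((a1, ap) :: K), forall x, mu x = lam x} /\
    {in cvars c, forall x, mu (xi1 x) = xi2 x}.
  apply: mu_exists => // x hx; apply: Hd2.
  have -> : (asubst (ren_subst lam) a1, sig ap) :: gshift sig (gsubst (ren_subst lam) K)
     = gshift sig (gsubst (ren_subst lam) ((a1, ap) :: K)) by [].
  by rewrite gvars_shift gvars_ren.
have Hm2' : irmgu th2 (asubst (ren_subst mu) a1)
    (asubst (ren_subst mu) (asubst (ren_subst xi1) (chead c))).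
  rewrite (@ren_agree_a mu lam a1); last first.
    by move=> x hx; apply: muG; rewrite gvars_cons mem_cat hx.
  rewrite ren_comp_a (@ren_agree_a _ xi2 (chead c)) //.
  by move=> x hx; apply: muC; rewrite /cvars mem_cat hx.
have [eta [reta Heta]] := mgu_ren Hm1 rmu Hm2'.
exists eta, rho; split=> //; split=> //.
rewrite /sres /=.
rewrite (@ren_agree_g lam mu K); last first.
  by move=> x hx; rewrite muG // gvars_cons mem_cat hx orbT.
have EB : gsubst (ren_subst xi2) (cbody c) =
    gsubst (ren_subst mu) (gsubst (ren_subst xi1) (cbody c)).
  rewrite ren_comp_g; apply: ren_agree_g => x hx.
  by rewrite muC // /cvars mem_cat hx orbT.
rewrite EB.
rewrite (gshift_subst sig) (gshift_subst pi2) -gsubst_padd gsubst_comp.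
rewrite gsubst_comp [gshift rho _]gshift_subst gshift_padd // HKs.
have HB' : gshift rho (gshift pi1 (gsubst (ren_subst xi1) (cbody c))) =
    gshift pi2 (gsubst (ren_subst xi1) (cbody c)) by rewrite !gshift_subst HBr.
rewrite HB'; apply: gsubst_ext => x _ /=.
by rewrite Heta.
Qed.

Lemma partA S : scheduling_rule S -> forall ds1 ds2 G G' Q R,
  chain G ds1 Q -> chain G' ds2 R -> all_in S ds1 -> all_in S ds2 ->
  template ds1 = template ds2 -> pvariant G' G -> pvariant R Q.
Proof.
move=> HS; elim=> [|s1 ds1 IH] [|s2 ds2] G G' Q R //=.
- by move=> -> ->.
- move=> [_ [e1 c1]] [_ [e2 c2]] [S1 A1] [S2 A2] [Ecl Et] [lam [sig [rl [hs EG]]]].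
  apply: (IH _ _ _ _ _ c1 c2 A1 A2 Et).
  apply: (step_variant HS S1 S2 rl hs); last by rewrite Ecl.
  by rewrite e2 e1.
Qed.

Lemma congr_id s t : is_step s -> ssrc t = ssrc s -> sclause t = sclause s ->
  sshift t = (fun p => id (sshift s p)) -> mutual_congruent_lowerings s t.
Proof.
case: s => [[|a K] c xi th pi]; rewrite /is_step /=; first by case=> _ [].
move=> [HG _] Et Ec Esh.
have HK := pgoal_tail HG.
have E1 : (asubst (ren_subst id) a.1, id a.2) :: padd (gshift id (gsubst (ren_subst id) K)) [::]
    = a :: K by rewrite padd_nil ?id_variant // asubst_ren_id //; case: (a).
split.
  split=> //; exists a, K; split=> //.
  exists id, id, [::]; split; first exact: renaming_id.
  split; first exact: shifting_id.
  do 2! (split=> //); split; first by rewrite Et.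
  exists id; split; first exact: shifting_id.
  by split=> //; rewrite Esh gshift_comp.
split; first by rewrite Ec.
exists a, K; split=> //.
exists id, id, [::]; split; first exact: renaming_id.
split; first exact: shifting_id.
do 2! (split=> //); split; first by [].
exists id; split; first exact: shifting_id.
by split=> //; rewrite Ec Esh gshift_comp.
Qed.

Lemma partB S (V : seq nat) : scheduling_rule S -> forall ds' G G' R (used : seq nat),
  chain G' ds' R -> all_in S ds' -> pvariant G' G -> is_pgoal G ->
  exists ds Q, chain G ds Q /\ apart used ds /\ template ds = template ds' /\
    all_in S ds /\ (forall x, x \in nvar ds -> x \notin V).
Proof.
move=> HS; have [HSt [[Hc1 Hc2] Hdet]] := HS.
elim=> [|s' ds' IH] G G' R used /=.
  by move=> _ _ _ _; exists [::], G.
move=> [St' [Es' Hc]] [S' A'] [lam [sig [rl [hs EG]]]] HG.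
have [lami [rli [l1 l2]]] := renaming_inv rl.
have [sigi [Hsigi [g1 g2]]] := shifting_inv hs.
have [t0 [St0 [Et0 [Ect0 _]]]] := transport [::] St' rli Hsigi.
have Et0' : ssrc t0 = G by rewrite Et0 Es' EG variant_inv.
have [s [Ss [Es Ecs]]] : exists s, S s /\ ssrc s = G /\ sclause s = sclause s'.
  by apply: Hc1; exists t0.
have [t [St [Et [Ect [Hfr Hsh]]]]] := transport (used ++ V) (HSt _ Ss) renaming_id shifting_id.
rewrite id_variant in Et.
have Stt : S t.
  by apply: (Hc2 s) => //; apply: congr_id => //; apply: HSt.
have Hv : pvariant (sres s') (sres t).
  apply: (step_variant HS Stt S' rl hs); last by rewrite Ect Ecs.
  by rewrite Es' Et Es.
have [ds [Q [Hch [Hap [Ht [Hall HV]]]]]] :=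
  IH (sres t) (sres s') R (used ++ cvars (rclause t)) Hc A' Hv (sres_pgoal (HSt _ Stt)).
exists (t :: ds), Q; split; first by split; [exact: HSt|split; [rewrite Et|]].
split.
  split=> // x /Hfr; rewrite mem_cat negb_or; by case/andP.
split; first by rewrite /= Ht Ect Ecs.
split=> //.
move=> x; rewrite /nvar /= mem_cat => /orP [/Hfr|]; first by rewrite mem_cat negb_or => /andP [].
exact: HV.
Qed.

Theorem lemmaL3p2p2 (S : step -> Prop) (V : seq nat) (G G' : pgoal) :
  scheduling_rule S -> is_pgoal G -> pvariant G' G ->
  (forall (D : seq clause) (ds1 ds2 : seq step) (Q R : pgoal),
      pSLD_via S G D ds1 Q -> pSLD_via S G' D ds2 R -> pvariant R Q) /\
  (forall (D : seq clause),
      (exists (ds' : seq step) (R : pgoal), pSLD_via S G' D ds' R) ->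
      exists (ds : seq step) (Q : pgoal),
        pSLD_via S G D ds Q /\ (forall x, x \in nvar ds -> x \notin V)).
Proof.
move=> HS HG Hv; split.
  move=> D ds1 ds2 Q R [[c1 _] [t1 a1]] [[c2 _] [t2 a2]].
  by apply: (partA HS c1 c2 a1 a2 _ Hv); rewrite t1 t2.
move=> D [ds' [R [[c' _] [t' a']]]].
have [ds [Q [Hc [Hap [Ht [Ha HV]]]]]] := partB V HS (gvars G) c' a' Hv HG.
by exists ds, Q; split=> //; split=> //; split=> //; rewrite Ht.
Qed.
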